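(* Fix $\eta\in[0,1)$. Let $\mathbf{Struct}^{\mathrm{fib}}_\eta$ be the full subcategory of $\mathbf{Struct}_\eta$ whose objects $\mathcal M=(X,\mathcal A,\mu,\mu^{\otimes2},R,I,\Pi_R,G,E_0,\eta)$ satisfy: $\{r\}\in\mathcal A$ and $\Pi_R^{-1}(\{r\})\in\mathcal A$ for every $r\in R$, and either (R-fin) $R$ is finite, or (R-ctbl) $R$ is countable, $\mathcal A$ is a $\sigma$-algebra and $\mu$ is $\sigma$-additive. Let $\mathbf{Struct}^{\mathrm{id}}_\eta$ be the full subcategory of $\mathbf{Struct}_\eta$ of objects with $R=X$, $I=\varnothing$, $\Pi_R=\mathrm{id}_X$. For an object $\mathcal M$ of $\mathbf{Struct}^{\mathrm{fib}}_\eta$ let $\mathcal M|_R=(R,\ \mathcal A\cap\mathcal P(R),\ \mu|_R,\ \mu^{\otimes2}|_{R\times R},\ R,\ \varnothing,\ \mathrm{id}_R,\ G\cap(R\times R),\ \mu(R),\ \eta)$. Then $\mathcal M|_R$ is an object of $\mathbf{Struct}^{\mathrm{id}}_\eta$ (in particular $\mu(R)>0$), every morphism $\phi:\mathcal M\to\mathcal M'$ in $\mathbf{Struct}^{\mathrm{fib}}_\eta$ satisfies $\phi(R)\subseteq R'$ and its restriction $\phi|_R:R\to R'$ is a morphism $\mathcal M|_R\to\mathcal M'|_{R'}$, and the assignment $\mathcal M\mapsto\mathcal M|_R$, $\phi\mapsto\phi|_R$ is a functor $\mathbf{Struct}^{\mathrm{fib}}_\eta\to\mathbf{Struct}^{\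mathrm{id}}_\eta$.
   Context: An admissible structural model is a tuple $(X,\mathcal A,\mu,\mu^{\otimes2},R,I,\Pi_R,G,E_0,\eta)$ with $X$ nonempty, $\mathcal A\subseteq\mathcal P(X)$ an algebra, $\mu:\mathcal A\to[0,\infty)$ finitely additive, $\mu^{\otimes2}$ finitely additive on the algebra $\mathcal A\otimes\mathcal A$ generated by rectangles with $\mu^{\otimes2}(B_1\times B_2)=\mu(B_1)\mu(B_2)$, $R,I\in\mathcal A$ disjoint, $\Pi_R:X\to R$ a map, $G\in\mathcal A\otimes\mathcal A$, $E_0>0$, $\eta\in[0,1]$, satisfying: Axiom I: $\Pi_R\circ\Pi_R=\Pi_R$, $\Pi_R|_R=\mathrm{id}_R$, $\Pi_R^{-1}(B)\in\mathcal A$ for $B\in\mathcal A$, $B\subseteq R$; Axiom II: $G$ reflexive, symmetric, $G\circ G=G$ (relational composition); Axiom III: $\mu(R)+\mu(I)=E_0$, $\mu(\Pi_R^{-1}(B))=\mu(B)$ for $B\in\mathcal A$, $B\subseteq R$, and for all $B\in\mathcal A$, $\mu^{\otimes2}((B\times X)\cap G)=\mu(B)+\eta\,\mu^{\otimes2}((\Pi_R^{-1}(B)\times X)\cap G)$. A morphism $\phi:\mathcal M\to\mathcal M'$ between admissible structural models $\mathcal M=(X,\mathcal A,\mu,\mu^{\otimes2},R,I,\Pi_R,G,E_0,\eta)$ and $\mathcal M'=(X',\mathcal A',\mu',\mu'^{\otimes2},R',I',\Pi_{R'},G',E_0',\eta)$ is a map $\phi:X\to X'$ such that: (M1) $\phi^{-1}(B')\in\mathcal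 A$ for all $B'\in\mathcal A'$ and $(\phi\times\phi)^{-1}(S')\in\mathcal A\otimes\mathcal A$ for all $S'\in\mathcal A'\otimes\mathcal A'$; (M2) $\phi\circ\Pi_R=\Pi_{R'}\circ\phi$; (M3) $(x,y)\in G$ implies $(\phi(x),\phi(y))\in G'$; (M4) $\mu(\phi^{-1}(B'))=\mu'(B')$ for all $B'\in\mathcal A'$ and $\mu^{\otimes2}((\phi\times\phi)^{-1}(S'))=\mu'^{\otimes2}(S')$ for all $S'\in\mathcal A'\otimes\mathcal A'$. $\mathbf{Struct}_\eta$ is the category of admissible structural models with parameter $\eta$ and these morphisms. *)

(* Defs.v *)
From HB Require Import structures.
From mathcomp Require Import all_boot all_order all_algebra.
From mathcomp Require Import all_classical all_reals all_analysis.
Set Implicit Arguments. Unset Strict Implicit. Unset Printing Implicit Defensive.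
Import Order.TTheory GRing.Theory Num.Theory.
Import numFieldNormedType.Exports.
Local Open Scope classical_set_scope.
Local Open Scope ring_scope.

Section Defs.
Variable R : realType.

Definition is_algebra {X : Type} (A : set (set X)) : Prop :=
  [/\ A setT,
      (forall B, A B -> A (~` B)) &
      (forall B C, A B -> A C -> A (B `|` C))].

Definition is_sigma_algebra {X : Type} (A : set (set X)) : Prop :=
  is_algebra A /\ (forall F : nat -> set X, (forall n, A (F n)) -> A (\bigcup_n F n)).

(* A (x) A : the algebra on X * X generated by the rectangles B1 x B2, B1 B2 in A *)
Definition rect_algebra {X : Type} (A : set (set X)) : set (set (X * X)) :=
  fun S => forall F : set (set (X * X)), is_algebra F ->
    (forall B1 B2, A B1 -> A B2 -> F (B1 `*` B2)) -> F S.

Definition fin_additive {T : Type} (A : set (set T)) (m : set T -> R) : Prop :=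
  (forall B, A B -> 0 <= m B) /\
  (forall B C, A B -> A C -> B `&` C = set0 -> m (B `|` C) = m B + m C).

Definition sigma_additive {T : Type} (A : set (set T)) (m : set T -> R) : Prop :=
  forall F : nat -> set T, (forall n, A (F n)) ->
    (forall i j, i <> j -> F i `&` F j = set0) ->
    A (\bigcup_n F n) ->
    ((fun n : nat => \sum_(i < n) m (F i)) : nat -> R) @ \oo --> (m (\bigcup_n F n) : R).

Definition rel_comp {X : Type} (G H : set (X * X)) : set (X * X) :=
  [set p | exists y, G (p.1, y) /\ H (y, p.2)].

(* raw data (X, A, mu, mu2, R, I, Pi_R, G, E0, eta); Pi_R : X -> R is encoded as
   Pi : X -> X together with the requirement that Pi x lies in R. *)
Unset Implicit Arguments.
Record pre_model := PreModel {
  carrier : Type;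
  alg : set (set carrier);
  mu : set carrier -> R;
  mu2 : set (carrier * carrier) -> R;
  RR : set carrier;
  II : set carrier;
  Pi : carrier -> carrier;
  G : set (carrier * carrier);
  E0 : R;
  eta : R }.
Set Implicit Arguments.

Definition pairmap {X Y : Type} (f : X -> Y) : X * X -> Y * Y :=
  fun p => (f p.1, f p.2).

Record admissible (M : pre_model) : Prop := {
  adm_nonempty : inhabited (carrier M);
  adm_alg : is_algebra (alg M);
  adm_mu : fin_additive (alg M) (mu M);
  adm_mu2 : fin_additive (rect_algebra (alg M)) (mu2 M);
  adm_mu2_rect : forall B1 B2, alg M B1 -> alg M B2 ->
      mu2 M (B1 `*` B2) = mu M B1 * mu M B2;
  adm_R : alg M (RR M);
  adm_I : alg M (II M);
  adm_RI : RR M `&` II M = set0;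
  adm_Pi_range : forall x, RR M (Pi M x);
  adm_G : rect_algebra (alg M) (G M);
  adm_E0 : 0 < E0 M;
  adm_eta : 0 <= eta M <= 1;
  ax1_idem : forall x, Pi M (Pi M x) = Pi M x;
  ax1_id : forall x, RR M x -> Pi M x = x;
  ax1_meas : forall B, alg M B -> B `<=` RR M -> alg M (Pi M @^-1` B);
  ax2_refl : forall x, G M (x, x);
  ax2_sym : forall x y, G M (x, y) -> G M (y, x);
  ax2_trans : rel_comp (G M) (G M) = G M;
  ax3_E0 : mu M (RR M) + mu M (II M) = E0 M;
  ax3_pres : forall B, alg M B -> B `<=` RR M -> mu M (Pi M @^-1` B) = mu M B;
  ax3_bal : forall B, alg M B ->
      mu2 M ((B `*` setT) `&` G M)
      = mu M B + eta M * mu2 M ((Pi M @^-1` B `*` setT) `&` G M) }.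

Definition is_morphism (M M' : pre_model) (phi : carrier M -> carrier M') : Prop :=
  [/\ (forall B', alg M' B' -> alg M (phi @^-1` B')) /\
      (forall S', rect_algebra (alg M') S' ->
                  rect_algebra (alg M) (pairmap phi @^-1` S')),
      (forall x, phi (Pi M x) = Pi M' (phi x)),
      (forall x y, G M (x, y) -> G M' (phi x, phi y)) &
      (forall B', alg M' B' -> mu M (phi @^-1` B') = mu M' B') /\
      (forall S', rect_algebra (alg M') S' ->
                  mu2 M (pairmap phi @^-1` S') = mu2 M' S')].

Definition struct_obj (e : R) (M : pre_model) : Prop :=
  admissible M /\ eta M = e.

Definition fib_obj (e : R) (M : pre_model) : Prop :=
  [/\ struct_obj e M,
      (forall r, RR M r -> alg M [set r] /\ alg M (Pi M @^-1` [set r])) &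
      (finite_set (RR M) \/
       [/\ countable (RR M), is_sigma_algebra (alg M) & sigma_additive (alg M) (mu M)])].

Definition id_obj (e : R) (M : pre_model) : Prop :=
  [/\ struct_obj e M, RR M = setT, II M = set0 & (forall x, Pi M x = x)].

Definition restrictR (M : pre_model) : pre_model :=
  @PreModel {x : carrier M | RR M x}
    (fun B => alg M (sval @` B))
    (fun B => mu M (sval @` B))
    (fun S => mu2 M (pairmap sval @` S))
    setT set0 id
    (pairmap sval @^-1` G M)
    (mu M (RR M))
    (eta M).

Definition restrict_map (M M' : pre_model) (phi : carrier M -> carrier M')
  (h : forall x, RR M x -> RR M' (phi x)) :
  carrier (restrictR M) -> carrier (restrictR M') :=
  fun x => exist (RR M') (phi (sval x)) (h (sval x) (svalP x)).

End Defs.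

Arguments carrier {R}. Arguments alg {R}. Arguments mu {R}. Arguments mu2 {R}.
Arguments RR {R}. Arguments II {R}. Arguments Pi {R}. Arguments G {R}.
Arguments E0 {R}. Arguments eta {R}.
Arguments is_morphism {R} M M' phi.
Arguments restrict_map {R M M'} phi h _.

(* Main.v *)
Require Import Defs.
From HB Require Import structures.
From mathcomp Require Import all_boot all_order all_algebra.
From mathcomp Require Import all_classical all_reals all_analysis.
From mathcomp Require Import lra.
Import Order.TTheory GRing.Theory Num.Theory.
Local Open Scope classical_set_scope.
Local Open Scope ring_scope.

Section Gen.
Context {T : Type} {A : set (set T)} (hA : is_algebra A).

Lemma alg_T : A setT. Proof. by case: hA. Qed.
Lemma alg_C {B} : A B -> A (~` B). Proof. by case: hA => _ h _; apply: h. Qed.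
Lemma alg_U {B C} : A B -> A C -> A (B `|` C). Proof. by case: hA => _ _ h; apply: h. Qed.
Lemma alg_0 : A set0. Proof. rewrite -setCT; exact/alg_C/alg_T. Qed.
Lemma alg_I {B C} : A B -> A C -> A (B `&` C).
Proof. move=> hB hC; rewrite -[B `&` C]setCK setCI; apply/alg_C/alg_U; exact: alg_C. Qed.
Lemma alg_D {B C} : A B -> A C -> A (B `\` C).
Proof. by move=> hB hC; rewrite setDE; apply: alg_I => //; apply: alg_C. Qed.
End Gen.

Lemma rect_alg {T : Type} (A : set (set T)) : is_algebra (rect_algebra A).
Proof.
split.
- by move=> F hF _; exact: alg_T.
- by move=> B hB F hF hr; apply: alg_C => //; apply: hB.
- by move=> B C hB hC F hF hr; apply: alg_U => //; [apply: hB|apply: hC].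
Qed.

Lemma rect_rect {T : Type} (A : set (set T)) B1 B2 : A B1 -> A B2 -> rect_algebra A (B1 `*` B2).
Proof. by move=> h1 h2 F hF hr; apply: hr. Qed.

Lemma rect_pre {T U : Type} (A : set (set T)) (A' : set (set U)) (f : T -> U) :
  (forall B, A' B -> A (f @^-1` B)) ->
  forall S, rect_algebra A' S -> rect_algebra A (Defs.pairmap f @^-1` S).
Proof.
move=> hf S hS; apply: (hS (fun S => rect_algebra A (Defs.pairmap f @^-1` S))).
- split.
  + exact: alg_T (rect_alg A).
  + by move=> B hB; rewrite preimage_setC; apply: (alg_C (rect_alg A)).
  + by move=> B C hB hC; rewrite preimage_setU; apply: (alg_U (rect_alg A)).
- move=> B1 B2 h1 h2.
  have -> : Defs.pairmap f @^-1` (B1 `*` B2) = (f @^-1` B1) `*` (f @^-1` B2) by [].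
  by apply: rect_rect; apply: hf.
Qed.

Section Meas.
Context {R : realType} {T : Type} {A : set (set T)} (hA : is_algebra A)
  {m : set T -> R} (hm : fin_additive A m).

Lemma m0 : m set0 = 0.
Proof.
case: hm => _ h; have := h set0 set0 (alg_0 hA) (alg_0 hA) (setI0 _).
by rewrite setU0 => /(congr1 (fun x => x - m set0)); rewrite subrr addrK.
Qed.

Lemma m_ge0 {B} : A B -> 0 <= m B. Proof. by case: hm => h _; apply: h. Qed.

Lemma m_split {B C} : A B -> A C -> B `<=` C -> m C = m B + m (C `\` B).
Proof.
move=> hB hC sBC; case: hm => _ h; rewrite -h //.
- by rewrite setDUK.
- exact: (alg_D hA hC hB).
- by rewrite setDE setICA setICr setI0.
Qed.

Lemma m_le {B C} : A B -> A C -> B `<=` C -> m B <= m C.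
Proof.
move=> hB hC s; rewrite (m_split hB hC s) lerDl; apply: m_ge0; exact: (alg_D hA).
Qed.

Lemma m_sub {B C} : A B -> A C -> m (B `|` C) <= m B + m C.
Proof.
move=> hB hC; have e : B `|` C = B `|` (C `\` B) by rewrite setDE setUIr setUCr setIT.
have hD : A (C `\` B) := alg_D hA hC hB.
have dj : B `&` (C `\` B) = set0 by rewrite setDE setICA setICr setI0.
case: hm => _ h; rewrite e (h _ _ hB hD dj).
by rewrite lerD2l; apply: m_le => // x [].
Qed.

Lemma m_null {B C N} : A B -> A C -> A N -> m N = 0 -> B `<=` C -> C `\` B `<=` N ->
  m B = m C.
Proof.
move=> hB hC hN mN s d; rewrite (m_split hB hC s).
suff -> : m (C `\` B) = 0 by rewrite addr0.
apply/eqP; rewrite eq_le m_ge0 ?andbT; last exact: (alg_D hA).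
by rewrite -mN; apply: m_le => //; apply: (alg_D hA).
Qed.
End Meas.
Lemma sval_inj {T : Type} {P : T -> Prop} {x y : {z | P z}} : sval x = sval y -> x = y.
Proof. apply: eq_sig_hprop => z p q; exact: Prop_irrelevance. Qed.

Section Img.
Context {T : Type} (P : set T).
Local Notation V := (@sval T P).
Local Notation PV := (Defs.pairmap (@sval T P)).

Lemma imV_T : V @` setT = P.
Proof.
apply/seteqP; split=> x /=; first by case=> -[y py] _ <-.
by move=> px; exists (exist _ x px).
Qed.

Lemma imV_sub B : V @` B `<=` P.
Proof. by move=> x [[y py] _ <-]. Qed.

Lemma imV_C B : V @` (~` B) = P `&` ~` (V @` B).
Proof.
apply/seteqP; split=> x /=.
- case=> -[y py] /= nB <-; split => // -[z zB] ez; apply: nB; by rewrite -(@sval_inj _ _ z (exist _ y py) ez).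
- case=> px nB; exists (exist _ x px) => //= hB; apply: nB; by exists (exist _ x px).
Qed.

Lemma imV_pre B : V @` (V @^-1` B) = P `&` B.
Proof.
apply/seteqP; split=> x /=.
- by case=> -[y py] /= hB <-.
- by case=> px hB; exists (exist _ x px).
Qed.

Lemma imV_disj B C : B `&` C = set0 -> V @` B `&` V @` C = set0.
Proof.
move=> h; apply/seteqP; split=> [x [[y yB ey] [z zC ez]]|x []].
have eyz : y = z by apply: sval_inj; rewrite ey ez.
suff : (B `&` C) y by rewrite h.
by split => //; rewrite eyz.
Qed.

Lemma imP_T : PV @` setT = P `*` P.
Proof.
apply/seteqP; split=> -[a b] /=; first by case=> -[[y py] [z pz]] _ [<- <-].
by case=> pa pb; exists (exist _ a pa, exist _ b pb).
Qed.

Lemma imP_sub S : PV @` S `<=` P `*` P.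
Proof. by move=> _ [[[y py] [z pz]] _ <-]. Qed.

Lemma PV_inj {p q} : PV p = PV q -> p = q.
Proof.
case: p q => [p1 p2] [q1 q2] [e1 e2]; by rewrite (sval_inj e1) (sval_inj e2).
Qed.

Lemma imP_C S : PV @` (~` S) = (P `*` P) `&` ~` (PV @` S).
Proof.
apply/seteqP; split=> x /=.
- case=> p nS <-; split; first by apply: imP_sub; exists p.
  by case=> q qS eq; apply: nS; rewrite -(PV_inj eq).
- case: x => a b [[pa pb] nS]; exists (exist _ a pa, exist _ b pb) => //= hS.
  by apply: nS; exists (exist _ a pa, exist _ b pb).
Qed.

Lemma imP_rect B1 B2 : PV @` (B1 `*` B2) = V @` B1 `*` V @` B2.
Proof.
apply/seteqP; split=> -[a b] /=.
- by case=> -[y z] [h1 h2] [<- <-]; split; [exists y|exists z].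
- by case=> -[y h1 <-] [z h2 <-]; exists (y, z).
Qed.

Lemma imP_disj S U : S `&` U = set0 -> PV @` S `&` PV @` U = set0.
Proof.
move=> h; apply/seteqP; split=> [x [[y yS ey] [z zU ez]]|x []].
have eyz : y = z by apply: PV_inj; rewrite ey ez.
suff : (S `&` U) y by rewrite h.
by split => //; rewrite eyz.
Qed.

Lemma imP_pre S : PV @` (PV @^-1` S) = (P `*` P) `&` S.
Proof.
apply/seteqP; split=> -[a b] /=.
- by case=> -[[y py] [z pz]] /= hS [<- <-].
- by case=> -[pa pb] hS; exists (exist _ a pa, exist _ b pb).
Qed.

Variable A : set (set T).
Hypothesis hA : is_algebra A.
Hypothesis AP : A P.

Lemma res_alg : is_algebra (fun B => A (V @` B)).
Proof.
split => /=.
- by rewrite imV_T.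
- by move=> B hB; rewrite imV_C; apply: (alg_I hA) => //; apply: (alg_C hA).
- by move=> B C hB hC; rewrite image_setU; apply: (alg_U hA).
Qed.

Lemma res_rect S : rect_algebra (fun B => A (V @` B)) S -> rect_algebra A (PV @` S).
Proof.
move=> hS; apply: (hS (fun S => rect_algebra A (PV @` S))).
- split.
  + by rewrite imP_T; apply: rect_rect.
  + move=> B hB; rewrite imP_C; apply: (alg_I (rect_alg A)) => //.
      exact: rect_rect.
    exact: (alg_C (rect_alg A)).
  + by move=> B C hB hC; rewrite image_setU; apply: (alg_U (rect_alg A)).
- by move=> B1 B2 h1 h2; rewrite imP_rect; apply: rect_rect.
Qed.

Lemma res_pre S : rect_algebra A S -> rect_algebra (fun B => A (V @` B)) (PV @^-1` S).
Proof.
apply: rect_pre => B hB /=; rewrite imV_pre; exact: (alg_I hA).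
Qed.
End Img.
Section Model.
Context {R : realType} (M : pre_model R) (hM : admissible M).
Local Notation A := (alg M).
Local Notation RM := (RR M).
Let hA := adm_alg hM.
Let hA2 := rect_alg A.
Let hmu := adm_mu hM.
Let hmu2 := adm_mu2 hM.

Lemma pre_Pi_R : Pi M @^-1` RM = setT.
Proof. by apply/seteqP; split => x //= _; apply: adm_Pi_range. Qed.

Lemma mu_notR : mu M (~` RM) = 0.
Proof.
have := ax3_pres hM (adm_R hM) (@subset_refl _ _); rewrite pre_Pi_R.
rewrite (m_split hA hmu (adm_R hM) (alg_T hA) (@subsetT _ _)) setTD => h.
lra.
Qed.

Lemma mu_I : mu M (II M) = 0.
Proof.
apply/eqP; rewrite eq_le (m_ge0 hmu (adm_I hM)) andbT -mu_notR.
apply: (m_le hA hmu (adm_I hM) (alg_C hA (adm_R hM))) => x Ix Rx.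
by have : (RM `&` II M) x by []; rewrite adm_RI.
Qed.

Lemma mu_R_E0 : mu M RM = E0 M.
Proof. by have := ax3_E0 hM; rewrite mu_I addr0. Qed.

Lemma mu_R_pos : 0 < mu M RM.
Proof. rewrite mu_R_E0; exact: adm_E0 hM. Qed.

Definition NN := (~` RM `*` setT) `|` (setT `*` ~` RM).

Lemma NN_meas : rect_algebra A NN.
Proof.
apply: (alg_U hA2); apply: rect_rect; try exact: (alg_T hA); exact: (alg_C hA (adm_R hM)).
Qed.

Lemma NN_0 : mu2 M NN = 0.
Proof.
have h1 : rect_algebra A (~` RM `*` setT) by apply: rect_rect; [exact: (alg_C hA (adm_R hM))|exact: (alg_T hA)].
have h2 : rect_algebra A (setT `*` ~` RM) by apply: rect_rect; [exact: (alg_T hA)|exact: (alg_C hA (adm_R hM))].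
have := m_sub hA2 hmu2 h1 h2.
rewrite !(adm_mu2_rect hM) ?mu_notR ?mulr0 ?mul0r ?addr0; try exact: (alg_T hA); try exact: (alg_C hA (adm_R hM)).
move=> h; apply/eqP; rewrite eq_le h; exact: (m_ge0 hmu2 NN_meas).
Qed.

Local Notation V := (@sval (carrier M) RM).
Local Notation PV := (Defs.pairmap (@sval (carrier M) RM)).

Lemma bal_img (B : set {x | RM x}) :
  PV @` ((B `*` setT) `&` (PV @^-1` G M)) = ((V @` B) `*` RM) `&` G M.
Proof.
apply/seteqP; split => -[a b] /=.
- case=> -[x y] [[Bx _] Gxy] [<- <-]; split => //; split; [by exists x|exact: svalP].
- case=> -[[x Bx <-] Rb] Gab; exists (x, exist _ b Rb) => //.
Qed.

Lemma restr_adm : admissible (restrictR M).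
Proof.
have hR := adm_R hM.
constructor => /=.
- case: (adm_nonempty hM) => x; constructor; exists (Pi M x); exact: adm_Pi_range.
- exact: res_alg.
- split => [B hB|B C hB hC dj]; first exact: (m_ge0 hmu).
  rewrite image_setU; case: hmu => _ h; apply: h => //; exact: imV_disj.
- split => [S hS|S U hS hU dj].
    by apply: (m_ge0 hmu2); apply: res_rect.
  rewrite image_setU; case: hmu2 => _ h; apply: h; try exact: res_rect.
  exact: imP_disj.
- by move=> B1 B2 h1 h2; rewrite imP_rect; apply: (adm_mu2_rect hM).
- by rewrite imV_T.
- by rewrite image_set0; exact: (alg_0 hA).
- exact: setI0.
- by [].
- apply: res_pre => //; exact: (adm_G hM).
- exact: mu_R_pos.
- exact: (adm_eta hM).
- by [].
- by [].
- by [].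
- move=> x; exact: (ax2_refl hM).
- move=> x y; exact: (ax2_sym hM).
- apply/seteqP; split => -[x z] /=.
  + case=> y [h1 h2]; rewrite -(ax2_trans hM); by exists (sval y).
  + move=> h; exists x; split => //; exact: (ax2_refl hM).
- by rewrite imV_T image_set0 (m0 hA hmu) addr0.
- by [].
- move=> B hB.
  have -> : id @^-1` B = B by [].
  rewrite bal_img.
  set B' := V @` B.
  have sB' : B' `<=` RM by apply: imV_sub.
  have hPB : A (Pi M @^-1` B') := ax1_meas hM hB sB'.
  have mB : rect_algebra A ((B' `*` RM) `&` G M).
    by apply: (alg_I hA2); [apply: rect_rect|exact: (adm_G hM)].
  have mB1 : rect_algebra A ((B' `*` setT) `&` G M).
    by apply: (alg_I hA2); [apply: rect_rect => //; exact: (alg_T hA)|exact: (adm_G hM)].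
  have mB2 : rect_algebra A ((Pi M @^-1` B' `*` setT) `&` G M).
    by apply: (alg_I hA2); [apply: rect_rect => //; exact: (alg_T hA)|exact: (adm_G hM)].
  have e1 := m_null hA2 hmu2 mB mB1 NN_meas NN_0.
  have e2 := m_null hA2 hmu2 mB mB2 NN_meas NN_0.
  have := ax3_bal hM hB.
  rewrite -e1; last first.
  + move=> -[a b] [[[Ba _] Gab] nB]; right; split => // Rb; apply: nB; by split.
  + by move=> -[a b] [[Ba Rb] Gab].
  rewrite -e2 //.
  + move=> -[a b] [[Ba Rb] Gab]; split => //; split => //=.
    by rewrite (ax1_id hM) //; apply: sB'.
  + move=> -[a b] [[[Ba _] Gab] nB] /=.
    have [Ra|nRa] := pselect (RM a); last by left.
    right; split => // Rb; apply: nB; split => //; split => //.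
    by move: Ba => /=; rewrite (ax1_id hM).
Qed.

End Model.

Section Morph.
Context {R : realType} (M M' : pre_model R) (hM : admissible M) (hM' : admissible M')
  (phi : carrier M -> carrier M') (hphi : is_morphism M M' phi).
Local Notation V := (@sval (carrier M) (RR M)).
Local Notation PV := (Defs.pairmap (@sval (carrier M) (RR M))).
Local Notation V' := (@sval (carrier M') (RR M')).
Local Notation PV' := (Defs.pairmap (@sval (carrier M') (RR M'))).

Lemma morph_R : forall x, RR M x -> RR M' (phi x).
Proof.
move=> x Rx; have := adm_Pi_range hM' (phi x).
case: hphi => _ h2 _ _; by rewrite -h2 (ax1_id hM).
Qed.

Variable h : forall x, RR M x -> RR M' (phi x).
Local Notation rmap := (restrict_map phi h).

Lemma imV_rmap B : V @` (rmap @^-1` B) = RR M `&` (phi @^-1` (V' @` B)).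
Proof.
apply/seteqP; split => a /=.
- case=> x Bx <-; split; first exact: svalP.
  by exists (rmap x).
- case=> Ra [y By ey]; exists (exist _ a Ra) => //=.
  suff -> : rmap (exist _ a Ra) = y by [].
  by apply: sval_inj.
Qed.

Lemma imP_rmap S : PV @` (Defs.pairmap rmap @^-1` S) =
  (RR M `*` RR M) `&` (Defs.pairmap phi @^-1` (PV' @` S)).
Proof.
apply/seteqP; split => -[a b] /=.
- case=> -[x y] /= Sxy [<- <-]; split; first by split; exact: svalP.
  by exists (rmap x, rmap y).
- case=> -[Ra Rb] [[y z] Syz [ey ez]]; exists (exist _ a Ra, exist _ b Rb); last by [].
  have -> : Defs.pairmap rmap (exist _ a Ra, exist _ b Rb) = (y, z).
    by congr pair; apply: sval_inj.
  by [].
Qed.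

Lemma restr_morph : is_morphism (restrictR M) (restrictR M') rmap.
Proof.
have hA := adm_alg hM; have hA' := adm_alg hM'.
have hA2 := rect_alg (alg M).
case: hphi => -[m1 m1'] m2 m3 [m4 m4'].
have a1 : forall B, alg M' (V' @` B) -> alg M (V @` (rmap @^-1` B)).
  by move=> B hB; rewrite imV_rmap; apply: (alg_I hA) => //; [exact: (adm_R hM)|exact: m1].
split.
- split; first exact: a1.
  by apply: rect_pre.
- by [].
- by move=> x y /= hG; apply: m3.
- split.
  + move=> B hB /=; rewrite imV_rmap -m4 //.
    have hB' : alg M' (V' @` B) := hB.
    have hC := m1 _ hB'.
    have hBB : alg M (RR M `&` phi @^-1` (V' @` B)) by apply: (alg_I hA) => //; exact: (adm_R hM).
    apply: (m_null hA (adm_mu hM) hBB hC (alg_C hA (adm_R hM)) (mu_notR _ hM)).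
    * by move=> x [].
    * by move=> x [? nI] Rx; apply: nI.
  + move=> S hS /=; rewrite imP_rmap.
    have hS' := @res_rect _ (RR M') (alg M') (adm_R hM') S hS.
    rewrite -m4' //.
    have hBB : rect_algebra (alg M) ((RR M `*` RR M) `&` (Defs.pairmap phi @^-1` (PV' @` S))).
      apply: (alg_I hA2); last exact: m1'.
      by apply: rect_rect; exact: (adm_R hM).
    apply: (m_null hA2 (adm_mu2 hM) hBB (m1' _ hS') (NN_meas _ hM) (NN_0 _ hM)).
    * by move=> x [].
    * move=> -[a b] [Sab nI] /=.
      have [Ra|nRa] := pselect (RR M a); last by left.
      right; split => // Rb; apply: nI; by split.
Qed.
End Morph.

Theorem proposition8p11 (R : realType) (e : R) :
  0 <= e < 1 ->
  (* M|_R is an object of Struct^id_eta, in particular mu(R) > 0 *)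
  (forall M : pre_model R, fib_obj e M ->
     id_obj e (restrictR M) /\ 0 < mu M (RR M)) /\
  (* phi(R) included in R' and phi|_R is a morphism M|_R -> M'|_R' *)
  (forall (M M' : pre_model R) (phi : carrier M -> carrier M'),
     fib_obj e M -> fib_obj e M' -> is_morphism M M' phi ->
     exists h : (forall x, RR M x -> RR M' (phi x)),
       is_morphism (restrictR M) (restrictR M') (restrict_map phi h)) /\
  (* functoriality: identities *)
  (forall (M : pre_model R) (h : forall x, RR M x -> RR M (@id (carrier M) x)),
     fib_obj e M -> restrict_map id h = id) /\
  (* functoriality: composition *)
  (forall (M1 M2 M3 : pre_model R)
          (phi : carrier M1 -> carrier M2) (psi : carrier M2 -> carrier M3)
          (h1 : forall x, RR M1 x -> RR M2 (phi x))
          (h2 : forall x, RR M2 x -> RR M3 (psi x))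
          (h12 : forall x, RR M1 x -> RR M3 ((psi \o phi) x)),
     fib_obj e M1 -> fib_obj e M2 -> fib_obj e M3 ->
     is_morphism M1 M2 phi -> is_morphism M2 M3 psi ->
     restrict_map (psi \o phi) h12 = restrict_map psi h2 \o restrict_map phi h1).
Proof.
move=> he; split; [|split; [|split]].
- move=> M [[hM eM] _ _]; split; last exact: (mu_R_pos _ hM).
  split => //; split => //; exact: restr_adm.
- move=> M M' phi [[hM _] _ _] [[hM' _] _ _] hphi.
  exists (morph_R _ _ hM hM' _ hphi); exact: restr_morph.
- move=> M h _; apply: funext => -[x hx]; rewrite /restrict_map /=.
  by congr exist; exact: Prop_irrelevance.
- move=> M1 M2 M3 phi psi h1 h2 h12 _ _ _ _ _; apply: funext => -[x hx].
  rewrite /restrict_map /=.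
  by congr exist; exact: Prop_irrelevance.
Qed.
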